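(* Let $\mathcal A$ be a weakly amenable Banach algebra and $I$ a closed two-sided ideal of $\mathcal A$ which has a bounded approximate identity $(e_\alpha)_\alpha$ that is quasi-central, i.e. $\lim_\alpha(ae_\alpha-e_\alpha a)=0$ for every $a\in\mathcal A$. Then $\mathcal A$ is $I$-weakly amenable, i.e. $H^1(\mathcal A,I^* )=\{0\}$.
   Context: $I^*$ is a Banach $\mathcal A$-bimodule with $\langle x,a\cdot f\rangle=\langle xa,f\rangle$, $\langle x,f\cdot a\rangle=\langle ax,f\rangle$. A derivation $D:\mathcal A\to Z$ is a continuous linear map with $D(ab)=a\cdot D(b)+D(a)\cdot b$; it is inner if $D(a)=a\cdot z-z\cdot a$ for some $z\in Z$; $H^1(\mathcal A,Z)=\{0\}$ means every derivation is inner. $\mathcal A$ is weakly amenable if $H^1(\mathcal A,\mathcal A^* )=\{0\}$. *)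

(* Defs.v *)
From HB Require Import structures.
From mathcomp Require Import all_boot all_order all_algebra.
From mathcomp Require Import complex.
From mathcomp Require Import all_classical all_reals all_analysis.
Set Implicit Arguments. Unset Strict Implicit. Unset Printing Implicit Defensive.
Import Order.TTheory GRing.Theory Num.Theory.
Import numFieldNormedType.Exports.
Local Open Scope classical_set_scope.
Local Open Scope ring_scope.
Local Open Scope complex_scope.

Section BanachAlgebra.
Variables (R : realType) (A : completeNormedModType R[i]).

Definition banach_algebra_mul (mul : A -> A -> A) : Prop :=
  [/\ (forall (k : R[i]) (a b c : A), mul (k *: a + b) c = k *: mul a c + mul b c),
      (forall (k : R[i]) (a b c : A), mul a (k *: b + c) = k *: mul a b + mul a c),
      (forall a b c : A, mul a (mul b c) = mul (mul a b) c) &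
      (forall a b : A, `|mul a b| <= `|a| * `|b|)].

Definition closed_ideal (mul : A -> A -> A) (I : set A) : Prop :=
  [/\ I 0, (forall (k : R[i]) x y, I x -> I y -> I (k *: x + y)),
      (forall a x, I x -> I (mul a x) /\ I (mul x a)) & closed I].

(* Elements of the dual I^* are represented by functions f : A -> R[i]
   whose restriction to I is linear and bounded (only values on I matter). *)
Definition dual_elt (I : set A) (f : A -> R[i]) : Prop :=
  (forall (k : R[i]) x y, I x -> I y -> f (k *: x + y) = k * f x + f y) /\
  exists C : R, forall x, I x -> `|f x| <= C%:C * `|x|.

(* A derivation D : A -> I^*, for the module actions
   <x, a.f> = <xa, f> and <x, f.a> = <ax, f>.
   Continuity of the linear map D is boundedness in the operator norm. *)
Definition dual_derivation (mul : A -> A -> A) (I : set A)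
    (D : A -> A -> R[i]) : Prop :=
  [/\ (forall a, dual_elt I (D a)),
      (forall (k : R[i]) a b x, I x -> D (k *: a + b) x = k * D a x + D b x),
      (exists C : R, forall a x, I x -> `|D a x| <= C%:C * `|a| * `|x|) &
      (forall a b x, I x -> D (mul a b) x = D b (mul x a) + D a (mul b x))].

Definition inner_dual_derivation (mul : A -> A -> A) (I : set A)
    (D : A -> A -> R[i]) : Prop :=
  exists z : A -> R[i], dual_elt I z /\
    forall a x, I x -> D a x = z (mul x a) - z (mul a x).

Definition H1_dual_trivial (mul : A -> A -> A) (I : set A) : Prop :=
  forall D, dual_derivation mul I D -> inner_dual_derivation mul I D.

Definition weakly_amenable (mul : A -> A -> A) : Prop :=
  H1_dual_trivial mul setT.

Definition I_weakly_amenable (mul : A -> A -> A) (I : set A) : Prop :=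
  H1_dual_trivial mul I.

Definition directed_set (Idx : Type) (le : Idx -> Idx -> Prop) : Prop :=
  [/\ inhabited Idx, (forall i, le i i),
      (forall i j k, le i j -> le j k -> le i k) &
      (forall i j, exists k, le i k /\ le j k)].

Definition net_cvg (Idx : Type) (le : Idx -> Idx -> Prop) (u : Idx -> A) (l : A) : Prop :=
  forall eps : R, 0 < eps -> exists i0, forall i, le i0 i -> `|u i - l| < eps%:C.

Definition bounded_approx_identity (mul : A -> A -> A) (I : set A)
    (Idx : Type) (le : Idx -> Idx -> Prop) (e : Idx -> A) : Prop :=
  [/\ (forall i, I (e i)),
      (exists M : R, forall i, `|e i| <= M%:C) &
      (forall x, I x -> net_cvg le (fun i => mul x (e i)) x /\
                        net_cvg le (fun i => mul (e i) x) x)].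

Definition quasi_central (mul : A -> A -> A)
    (Idx : Type) (le : Idx -> Idx -> Prop) (e : Idx -> A) : Prop :=
  forall a, net_cvg le (fun i => mul a (e i) - mul (e i) a) 0.

End BanachAlgebra.

(* Main.v *)
Require Import Defs.
From HB Require Import structures.
From mathcomp Require Import all_boot all_order all_algebra.
From mathcomp Require Import complex.
From mathcomp Require Import all_classical all_reals all_analysis.
From mathcomp Require Import ring.
Import Order.TTheory GRing.Theory Num.Theory.
Import numFieldNormedType.Exports.
Local Open Scope classical_set_scope.
Local Open Scope ring_scope.
Local Open Scope complex_scope.
Set Implicit Arguments. Unset Strict Implicit.
Local Notation cRe := complex.Re.
Local Notation cIm := complex.Im.
Section C.
Context {R : realType}.
Lemma normC_R (x : R) : `|x%:C| = `|x|%:C.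
Proof. by rewrite normc_def /= expr0n addr0 sqrtr_sqr. Qed.
Lemma norm_i : `|'i : R[i]| = 1.
Proof. by rewrite normc_def /= expr0n expr1n add0r sqrtr1. Qed.
Lemma norm_ReIm (z : R[i]) : `|z| <= (`|cRe z| + `|cIm z|)%:C.
Proof.
rewrite {1}[z]complexE; apply: le_trans (ler_normD _ _) _.
by rewrite normrM norm_i mul1r !normC_R rmorphD.
Qed.
Lemma Re_le (z : R[i]) : `|cRe z|%:C <= `|z|.
Proof.
rewrite normc_def lecR -sqrtr_sqr ler_sqrt ?addr_ge0 ?sqr_ge0 //.
by rewrite lerDl sqr_ge0.
Qed.
Lemma Im_le (z : R[i]) : `|cIm z|%:C <= `|z|.
Proof.
rewrite normc_def lecR -sqrtr_sqr ler_sqrt ?addr_ge0 ?sqr_ge0 //.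
by rewrite lerDr sqr_ge0.
Qed.
Lemma ReB (z w : R[i]) : cRe (z - w) = cRe z - cRe w :> R.
Proof. by case: z; case: w. Qed.
Lemma ImB (z w : R[i]) : cIm (z - w) = cIm z - cIm w :> R.
Proof. by case: z; case: w. Qed.
Lemma realC {z : R[i]} : 0 <= z -> z = (cRe z)%:C.
Proof. by move=> /ger0_real /RRe_real ->. Qed.
Section UltraR.
Variables (Idx : Type) (U : set_system Idx).
Hypothesis HU : UltraFilter U.

Lemma ultra_fmap (g : Idx -> R) : UltraFilter (g @ U).
Proof.
split; first exact: fmap_proper_filter.
move=> G PG sub; apply/funext => A; apply/propext; split; last exact: sub.
move=> GA; have [//|UC] := in_ultra_setVsetC (g @^-1` A) HU.
have GC : G (~` A) by apply: sub.
have : G (A `&` ~` A) by apply: filterI.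
by rewrite setICr => /filter_ex [].
Qed.

Lemma real_ulim (g : Idx -> R) (B : R) : (forall i, `|g i| <= B) ->
  exists p : R, `|p| <= B /\ forall eps, 0 < eps -> U [set i | `|g i - p| < eps].
Proof.
move=> gB.
have := @segment_compact R (- B) B; rewrite compact_ultra => /(_ (g @ U) (ultra_fmap g)).
case.
  change (U (g @^-1` `[- B, B])); apply: filterS (filterT) => i _ /=; rewrite in_itv /= -ler_norml; exact: gB.
move=> p [/= + /cvgrPdist_lt cv]; rewrite in_itv /= -ler_norml => pB.
exists p; split => // eps /cv; rewrite nearE /=.
by apply: filterS => i /=; rewrite distrC.
Qed.
End UltraR.
End C.

Section UltraC.
Variables (R : realType) (Idx : Type) (U : set_system Idx).
Hypothesis HU : UltraFilter U.

Definition ulimit (f : Idx -> R[i]) (l : R[i]) :=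
  forall eps : R[i], 0 < eps -> U [set i | `|f i - l| < eps].
Definition small (f : Idx -> R[i]) :=
  forall eps : R[i], 0 < eps -> U [set i | `|f i| < eps].

Lemma pos_half {eps : R[i]} : 0 < eps -> 0 < eps / 2.
Proof. by move=> e0; rewrite divr_gt0 // ltr0n. Qed.

Lemma complex_ulim f (B : R[i]) : (forall i, `|f i| <= B) ->
  exists l, `|l| <= B + B /\ ulimit f l.
Proof.
move=> fB.
have [i0 _] := @filter_ex _ U _ setT filterT.
have B0 : 0 <= B := le_trans (normr_ge0 _) (fB i0).
have Bb := realC B0; set b := cRe B in Bb.
have gRe : forall i, `|cRe (f i)| <= b.
  by move=> i; rewrite -lecR -Bb; apply: le_trans (Re_le _) (fB i).
have gIm : forall i, `|cIm (f i)| <= b.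
  by move=> i; rewrite -lecR -Bb; apply: le_trans (Im_le _) (fB i).
have [p1 [p1b cv1]] := real_ulim HU gRe.
have [p2 [p2b cv2]] := real_ulim HU gIm.
exists (Complex p1 p2); split.
  apply: le_trans (norm_ReIm _) _; rewrite Bb -rmorphD lecR /=.
  exact: lerD.
move=> eps eps0; have epsE := realC (ltW eps0).
have e0 : 0 < cRe eps by move: eps0; rewrite ltcE => /andP[].
have e20 : 0 < cRe eps / 2 by rewrite divr_gt0 // ltr0n.
apply: filterS (filterI (cv1 _ e20) (cv2 _ e20)) => i [/= h1 h2].
apply: le_lt_trans (norm_ReIm _) _; rewrite ReB ImB /= epsE ltcR.
by rewrite [X in _ < X]splitr ltrD.
Qed.

Lemma ulimit_uniq f l1 l2 : ulimit f l1 -> ulimit f l2 -> l1 = l2.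
Proof.
move=> H1 H2; apply/eqP; apply: contraT => neq.
have d0 : 0 < `|l1 - l2| / 2 by rewrite pos_half // normr_gt0 subr_eq0.
have [i [/= h1 h2]] := filter_ex (filterI (H1 _ d0) (H2 _ d0)).
have : `|l1 - l2| < `|l1 - l2| / 2 + `|l1 - l2| / 2.
  apply: le_lt_trans (ler_distD (f i) _ _) _.
  by rewrite distrC ltrD.
by rewrite -splitr ltxx.
Qed.

Lemma ulimit_lin k f g a b : ulimit f a -> ulimit g b ->
  ulimit (fun i => k * f i + g i) (k * a + b).
Proof.
move=> Hf Hg eps eps0.
have e2 := pos_half eps0.
have k1 : 0 < `|k| + 1 by rewrite ltr_wpDl // ltr01.
have e1 : 0 < eps / 2 / (`|k| + 1) by rewrite divr_gt0.
apply: filterS (filterI (Hf _ e1) (Hg _ e2)) => i [/= h1 h2].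
have -> : k * f i + g i - (k * a + b) = k * (f i - a) + (g i - b).
  by rewrite mulrBr opprD addrACA.
apply: le_lt_trans (ler_normD _ _) _.
rewrite [X in _ < X]splitr; apply: ltrD => //.
rewrite normrM; apply: le_lt_trans (ler_wpM2l (normr_ge0 _) (ltW h1)) _.
rewrite -[X in _ < X](@divfK _ (`|k| + 1)) ?gt_eqF // mulrDr mulr1 mulrC.
by rewrite ltrDl.
Qed.

Lemma ulimit_small f g l : ulimit g l -> small (fun i => f i - g i) -> ulimit f l.
Proof.
move=> Hg Hs eps eps0; have e2 := pos_half eps0.
apply: filterS (filterI (Hg _ e2) (Hs _ e2)) => i [/= h1 h2].
apply: le_lt_trans (ler_distD (g i) _ _) _.
by rewrite [X in _ < X]splitr ltrD.
Qed.

Lemma small_add f g : small f -> small g -> small (fun i => f i + g i).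
Proof.
move=> Hf Hg eps eps0; have e2 := pos_half eps0.
apply: filterS (filterI (Hf _ e2) (Hg _ e2)) => i [/= h1 h2].
apply: le_lt_trans (ler_normD _ _) _.
by rewrite [X in _ < X]splitr ltrD.
Qed.

Lemma small_mono f g : (forall i, `|f i| <= `|g i|) -> small g -> small f.
Proof.
move=> fg Hg eps eps0; apply: filterS (Hg _ eps0) => i /= h.
exact: le_lt_trans (fg i) h.
Qed.

Definition L (f : Idx -> R[i]) := xget 0 [set l | ulimit f l].

Lemma L_eq f l : ulimit f l -> L f = l.
Proof.
move=> H; apply: (ulimit_uniq _ H); rewrite /L.
by apply: xgetPex; exists l.
Qed.

Lemma L_bnd f B : (forall i, `|f i| <= B) -> ulimit f (L f) /\ `|L f| <= B + B.
Proof.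
by move=> /complex_ulim [l [lB Hl]]; rewrite (L_eq Hl).
Qed.

Lemma L_lin k f g Bf Bg : (forall i, `|f i| <= Bf) -> (forall i, `|g i| <= Bg) ->
  L (fun i => k * f i + g i) = k * L f + L g.
Proof.
move=> /L_bnd [Hf _] /L_bnd [Hg _]; apply: L_eq; exact: ulimit_lin.
Qed.

Variables (le : Idx -> Idx -> Prop).
Hypothesis HT : forall i0, U [set i | le i0 i].

Lemma small_net (V : normedModType R[i]) (h : Idx -> V) l K : 0 <= K ->
  (forall eps : R, 0 < eps -> exists i0, forall i, le i0 i -> `|h i - l| < eps%:C) ->
  small (fun i => K * `|h i - l|).
Proof.
move=> K0 Hh eps eps0.
have k1 : 0 < K + 1 by rewrite ltr_wpDl // ltr01.
have e1 : 0 < eps / (K + 1) by rewrite divr_gt0.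
have e1E := realC (ltW e1).
have e1r : 0 < cRe (eps / (K + 1)) by move: e1; rewrite ltcE => /andP[].
have [i0 Hi0] := Hh _ e1r.
apply: filterS (HT i0) => i /= /Hi0; rewrite -e1E => hi.
rewrite normrM normr_id ger0_norm //.
apply: le_lt_trans (ler_wpM2l K0 (ltW hi)) _.
rewrite -[X in _ < X](@divfK _ (K + 1)) ?gt_eqF // mulrDr mulr1 mulrC.
by rewrite ltrDl.
Qed.
End UltraC.

Section Mul.
Context {R : realType} {A : completeNormedModType R[i]} (mul : A -> A -> A).
Hypothesis Hmul : banach_algebra_mul mul.

Lemma mul0l c : mul 0 c = 0.
Proof.
case: Hmul => linl _ _ _; have h := linl 1 0 0 c; rewrite !scale1r addr0 in h.
by apply: (addrI (mul 0 c)); rewrite -h addr0.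
Qed.
Lemma mul0r c : mul c 0 = 0.
Proof.
case: Hmul => _ linr _ _; have h := linr 1 c 0 0; rewrite !scale1r addr0 in h.
by apply: (addrI (mul c 0)); rewrite -h addr0.
Qed.
Lemma mulDl a b c : mul (a + b) c = mul a c + mul b c.
Proof. by case: Hmul => linl _ _ _; have := linl 1 a b c; rewrite !scale1r. Qed.
Lemma mulDr a b c : mul c (a + b) = mul c a + mul c b.
Proof. by case: Hmul => _ linr _ _; have := linr 1 c a b; rewrite !scale1r. Qed.
Lemma mulZl k a c : mul (k *: a) c = k *: mul a c.
Proof. by case: Hmul => linl _ _ _; rewrite -[k *: a]addr0 linl mul0l addr0. Qed.
Lemma mulZr k a c : mul c (k *: a) = k *: mul c a.
Proof. by case: Hmul => _ linr _ _; rewrite -[k *: a]addr0 linr mul0r addr0. Qed.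
Lemma mulBl a b c : mul (a - b) c = mul a c - mul b c.
Proof. by rewrite mulDl -scaleN1r mulZl scaleN1r. Qed.
Lemma mulBr a b c : mul c (a - b) = mul c a - mul c b.
Proof. by rewrite mulDr -scaleN1r mulZr scaleN1r. Qed.
Lemma mulA a b c : mul a (mul b c) = mul (mul a b) c.
Proof. by case: Hmul. Qed.
Lemma normM a b : `|mul a b| <= `|a| * `|b|.
Proof. by case: Hmul. Qed.
End Mul.

Lemma dual_sub {R : realType} {A : completeNormedModType R[i]} (I : set A) f :
  dual_elt I f -> forall x y, I x -> I y -> f (x - y) = f x - f y.
Proof.
move=> [lin _] x y Ix Iy; by rewrite addrC -scaleN1r lin // mulN1r addrC.
Qed.

Lemma ulimit_add {R : realType} Idx (U : set_system Idx) (HU : UltraFilter U)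
  (f g : Idx -> R[i]) a b : ulimit U f a -> ulimit U g b ->
  ulimit U (fun i => f i + g i) (a + b).
Proof.
move=> Hf Hg; have := ulimit_lin HU 1 Hf Hg; rewrite mul1r.
by under eq_fun do rewrite mul1r.
Qed.

Lemma ulimit_cst {R : realType} Idx (U : set_system Idx) (HU : UltraFilter U)
  (c : R[i]) : ulimit U (fun _ => c) c.
Proof. by move=> eps eps0; apply: filterS filterT => i _ /=; rewrite subrr normr0. Qed.


Unset Implicit Arguments.

Theorem theorem3p3 (R : realType) (A : completeNormedModType R[i])
    (mul : A -> A -> A) (I : set A)
    (Idx : Type) (le : Idx -> Idx -> Prop) (e : Idx -> A) :
  banach_algebra_mul mul ->
  weakly_amenable mul ->
  closed_ideal mul I ->
  directed_set le ->
  bounded_approx_identity mul I le e ->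
  quasi_central mul le e ->
  I_weakly_amenable mul I.
Proof.
move=> Hmul HWA [I0 Ilin Imul Icl] [[i00] refl trans dir] [eI [M HM] approx] HQ.
move=> D [Ddual Dlin [C HC] Dder].
pose F := filter_from setT (fun i0 => [set i | le i0 i]).
have FF : ProperFilter F.
  apply: filter_from_proper; last by move=> i _; exists i; exact: refl.
  apply: filter_from_filter; first by exists i00.
  move=> i j _ _; have [k [ik jk]] := dir i j; exists k => // l /= kl.
  by split; apply: trans kl.
have [U [HU FU]] := ultraFilterLemma FF.
have HT : forall i0, U [set i | le i0 i] by move=> i0; apply: FU; exists i0.
have M0 : 0 <= M%:C by apply: le_trans (normr_ge0 _) (HM i00).
pose m := M%:C.
pose c := `|C|%:C.
have c0 : 0 <= c by rewrite /c ler0c.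
have HD : forall a x, I x -> `|D a x| <= c * `|a| * `|x|.
  move=> a x Ix; apply: le_trans (HC a x Ix) _.
  apply: ler_wpM2r; first exact: normr_ge0.
  apply: ler_wpM2r; first exact: normr_ge0.
  by rewrite /c lecR ler_norm.
have Isub : forall x y, I x -> I y -> I (x - y).
  by move=> x y Ix Iy; rewrite addrC -scaleN1r; exact: Ilin.
have Iadd : forall x y, I x -> I y -> I (x + y).
  by move=> x y Ix Iy; rewrite -[x]scale1r; exact: Ilin.
pose phi i y := mul (e i) (mul y (e i)).
have Iphi : forall i y, I (phi i y).
  move=> i y; apply: (Imul _ _ _).1; exact: (Imul y _ (eI i)).1.
have Hphi : forall i y, `|phi i y| <= m * (`|y| * m).
  move=> i y; have h3 := HM i; have h2 := normM Hmul y (e i).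
  have h1 := normM Hmul (e i) (mul y (e i)).
  apply: le_trans h1 _; apply: ler_pM; rewrite ?normr_ge0 //.
  apply: le_trans h2 _; apply: ler_pM; rewrite ?normr_ge0 //.
have Hf : forall a y i, `|D a (phi i y)| <= c * `|a| * (m * (`|y| * m)).
  move=> a y i; apply: le_trans (HD _ _ (Iphi i y)) _; apply: ler_wpM2l.
    by rewrite mulr_ge0 ?normr_ge0.
  exact: Hphi.
pose Dt a y := L U (fun i => D a (phi i y)).
have DtB : forall a y, `|Dt a y| <= c * `|a| * (m * (`|y| * m)) + c * `|a| * (m * (`|y| * m)).
  by move=> a y; exact: (L_bnd HU (Hf a y)).2.
have Dtlim : forall a y, ulimit U (fun i => D a (phi i y)) (Dt a y).
  by move=> a y; exact: (L_bnd HU (Hf a y)).1.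
have phi_lin : forall i k x y, phi i (k *: x + y) = k *: phi i x + phi i y.
  by move=> i k x y; rewrite /phi (mulDl Hmul) (mulZl Hmul) (mulDr Hmul) (mulZr Hmul).
have DtD : dual_derivation mul setT Dt.
  split.
  - move=> a; split.
      move=> k x y _ _; rewrite /Dt.
      have -> : (fun i => D a (phi i (k *: x + y))) =
                (fun i => k * D a (phi i x) + D a (phi i y)).
        by apply/funext => i; rewrite phi_lin; apply: (Ddual a).1; apply: Iphi.
      exact (L_lin HU k (Hf a x) (Hf a y)).
    have K0 : 0 <= c * `|a| * m * m * 2 by rewrite !mulr_ge0 ?normr_ge0 ?ler0n.
    exists (complex.Re (c * `|a| * m * m * 2)) => y _; rewrite -(realC K0).
    apply: (le_trans (DtB a y)); rewrite le_eqVlt; apply/orP; left; apply/eqP; ring.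
  - move=> k a b x _; rewrite /Dt.
    have -> : (fun i => D (k *: a + b) (phi i x)) =
              (fun i => k * D a (phi i x) + D b (phi i x)).
      by apply/funext => i; apply: Dlin; apply: Iphi.
    exact (L_lin HU k (Hf a x) (Hf b x)).
  - have K0 : 0 <= c * m * m * 2 by rewrite !mulr_ge0 ?normr_ge0 ?ler0n.
    exists (complex.Re (c * m * m * 2)) => a y _; rewrite -(realC K0).
    apply: (le_trans (DtB a y)); rewrite le_eqVlt; apply/orP; left; apply/eqP; ring.
  - move=> a b x _; rewrite /Dt; apply: L_eq.
    have -> : (fun i => D (mul a b) (phi i x)) =
              (fun i => D b (mul (phi i x) a) + D a (mul b (phi i x))).
      by apply/funext => i; exact: Dder (Iphi i x).
    apply: ulimit_add => //.
      apply: (ulimit_small HU (Dtlim b (mul x a))).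
      have K0 : 0 <= c * `|b| * (m * `|x|) by rewrite !mulr_ge0 ?normr_ge0.
      apply: (@small_mono _ _ _ HU _ (fun i => (c * `|b| * (m * `|x|)) * `|mul a (e i) - mul (e i) a - 0|)).
        move=> i; rewrite normrM normr_id (ger0_norm K0) subr0.
        rewrite -(dual_sub (Ddual b)); last 2 first.
        + exact: (Imul a _ (Iphi i x)).2.
        + exact: Iphi.
        have -> : mul (phi i x) a - phi i (mul x a) =
                  mul (e i) (mul x (mul (e i) a - mul a (e i))).
          by rewrite /phi -!(mulA Hmul) -!(mulBr Hmul).
        apply: le_trans (HD _ _ _) _.
          apply: (Imul _ _ _).1; apply: (Imul _ _ _).1.
          apply: Isub; [exact: (Imul _ _ (eI i)).2 | exact: (Imul _ _ (eI i)).1].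
        have h1 := normM Hmul (e i) (mul x (mul (e i) a - mul a (e i))).
        have h2 := normM Hmul x (mul (e i) a - mul a (e i)).
        have cb0 : 0 <= c * `|b| by rewrite mulr_ge0 ?normr_ge0.
        apply: le_trans (ler_wpM2l cb0 h1) _.
        rewrite -(mulrA (c * `|b|)); apply: ler_wpM2l; first exact: cb0.
        rewrite -mulrA; apply: ler_pM; rewrite ?normr_ge0 ?mulr_ge0 ?normr_ge0 //.
        by rewrite distrC.
      exact (small_net HU HT K0 (HQ a)).
    apply: (ulimit_small HU (Dtlim a (mul b x))).
    have K0 : 0 <= c * `|a| * (`|x| * m) by rewrite !mulr_ge0 ?normr_ge0.
    apply: (@small_mono _ _ _ HU _ (fun i => (c * `|a| * (`|x| * m)) * `|mul b (e i) - mul (e i) b - 0|)).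
      move=> i; rewrite normrM normr_id (ger0_norm K0) subr0.
      rewrite -(dual_sub (Ddual a)); last 2 first.
      + exact: (Imul b _ (Iphi i x)).1.
      + exact: Iphi.
      have -> : mul b (phi i x) - phi i (mul b x) =
                mul (mul b (e i) - mul (e i) b) (mul x (e i)).
        by rewrite /phi (mulBl Hmul) !(mulA Hmul).
      apply: le_trans (HD _ _ _) _.
        by apply: (Imul _ _ _).1; exact: (Imul x _ (eI i)).1.
      have h1 := normM Hmul (mul b (e i) - mul (e i) b) (mul x (e i)).
      have h2 := normM Hmul x (e i).
      have ca0 : 0 <= c * `|a| by rewrite mulr_ge0 ?normr_ge0.
      apply: le_trans (ler_wpM2l ca0 h1) _.
      have -> : c * `|a| * (`|x| * m) * `|mul b (e i) - mul (e i) b| =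
                c * `|a| * (`|mul b (e i) - mul (e i) b| * (`|x| * m)) by ring.
      apply: ler_wpM2l; first by rewrite mulr_ge0 ?normr_ge0.
      apply: ler_wpM2l; first exact: normr_ge0.
      apply: le_trans h2 _; apply: ler_wpM2l; first exact: normr_ge0.
      exact: HM.
    exact (small_net HU HT K0 (HQ b)).
have [w [wd Hw]] := HWA Dt DtD.
exists w; split.
  case: wd => [lin [Cw HCw]]; split; first by move=> k x y _ _; apply: lin.
  by exists Cw => x _; apply: HCw.
move=> a x Ix; rewrite -Hw //.
symmetry; rewrite /Dt; apply: L_eq.
apply: (ulimit_small HU (ulimit_cst HU (D a x))).
have K1 : 0 <= c * `|a| * m by rewrite !mulr_ge0 ?normr_ge0.
have K2 : 0 <= c * `|a| by rewrite !mulr_ge0 ?normr_ge0.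
apply: (@small_mono _ _ _ HU _ (fun i => c * `|a| * m * `|mul x (e i) - x| + c * `|a| * `|mul (e i) x - x|)).
  move=> i; set g := (X in _ <= `|X|).
  have g0 : 0 <= g by rewrite /g addr_ge0 ?mulr_ge0 ?normr_ge0.
  rewrite (ger0_norm g0) /g.
  rewrite -(dual_sub (Ddual a)) //.
  have -> : phi i x - x = mul (e i) (mul x (e i) - x) + (mul (e i) x - x).
    by rewrite /phi (mulBr Hmul) addrA subrK.
  apply: le_trans (HD _ _ _) _.
    apply: Iadd.
      exact: (Imul (e i) _ (Isub _ _ (Imul x _ (eI i)).1 Ix)).1.
    exact: Isub _ _ (Imul (e i) x Ix).1 Ix.
  apply: le_trans (ler_wpM2l K2 (ler_normD _ _)) _; rewrite mulrDr; apply: lerD => //.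
  rewrite -(mulrA (c * `|a|)); apply: ler_wpM2l; first exact: K2.
  apply: le_trans (normM Hmul _ _) _.
  by apply: ler_wpM2r; [exact: normr_ge0 | exact: HM].
apply: small_add.
  exact (small_net HU HT K1 (approx x Ix).1).
exact (small_net HU HT K2 (approx x Ix).2).
Qed.
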